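(* Let $m\ge1$ and, for $\mathfrak{g}\in\{\mathfrak{h}_s,\mathfrak{r}_s,\mathfrak{d}_s\}$, $\mathcal{G}(q)=\max\{\mathfrak{g}(\tau):\tau\in T,\ \rho(\tau)\le q\}$. Then for $q\in\{\frac12,1,\frac32,2,\dots\}$: $\mathcal{G}(q)=\lfloor q+\frac12\rfloor$ for $\mathfrak{g}=\mathfrak{h}_s$ (simple iterations of semi-implicit methods); $\mathcal{G}(q)=\lfloor\frac23(q+1)\rfloor$ for $\mathfrak{g}=\mathfrak{r}_s$ (modified Newton iterations); $\mathcal{G}(q)=\lfloor\log_2\frac{q+1}{3}\rfloor+2$ for $\mathfrak{g}=\mathfrak{d}_s$ (full Newton iterations).
   Context: $T$: the empty tree $\emptyset$ and all $\tau=[\tau_1,\dots,\tau_\kappa]_l$ with $l\in\{0,\dots,m\}$, $\kappa\ge0$, $\tau_j\in T\setminus\{\emptyset\}$ unordered (new root of color $l$ joined to roots of the $\tau_j$; $\bullet_l$ if $\kappa=0$). Order: $\rho(\emptyset)=0$, $\rho([\tau_1,\dots,\tau_\kappa]_l)=\sum_j\rho(\tau_j)+1$ if $l=0$, $+\frac12$ if $l\ge1$. Maxima over empty sets are $0$. $\mathfrak{h}_s(\emptyset)=0$, $\mathfrak{h}_s([\tau_1,\dots,\tau_\kappa]_l)=1$ if $l>0$, $=1+\max_j\mathfrak{h}_s(\tau_j)$ if $l=0$. $\mathfrak{r}_s(\emptyset)=0$, $\mathfrak{r}_s(\bullet_l)=1$; for $\tau=[\tau_1,\dots,\tau_\kappa]_l$: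 $1$ if $l>0$; $\mathfrak{r}_s(\tau_1)$ if $l=0,\kappa=1$; $1+\max_j\mathfrak{r}_s(\tau_j)$ if $l=0,\kappa\ge2$. $\mathfrak{d}_s(\emptyset)=0$, $\mathfrak{d}_s(\bullet_l)=1$; for $\tau=[\tau_1,\dots,\tau_\kappa]_l$: $1$ if $l>0$; with $M=\max_j\mathfrak{d}_s(\tau_j)$, $M$ if $l=0$ and exactly one $i$ has $\mathfrak{d}_s(\tau_i)=M$, and $M+1$ if $l=0$ and at least two indices attain $M$. (These are the growth functions of simple, modified Newton and full Newton iterations for semi-implicit stochastic Taylor methods, i.e. those with $\Phi_{im}(\tau)\equiv0$ unless the root of $\tau$ has color $0$.) *)

(* Defs.v *)
From Stdlib Require Import Reals List Arith Bool.
Import ListNotations.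
Open Scope R_scope.

(* A nonempty colored tree: [Node l [t1;...;tk]] is [t1,...,tk]_l.
   Children are stored as a list; all functions below are symmetric in
   the children, so this represents unordered trees faithfully. *)
Inductive tree : Type := Node : nat -> list tree -> tree.

(* Elements of T: None is the empty tree, Some t a nonempty tree. *)
Definition T := option tree.

Fixpoint colors_ok (m : nat) (t : tree) : bool :=
  match t with Node l ts => Nat.leb l m && forallb (colors_ok m) ts end.
Definition colors_okT (m : nat) (t : T) : bool :=
  match t with None => true | Some t => colors_ok m t end.

Fixpoint rho (t : tree) : R :=
  match t with
  | Node l ts =>
      fold_right Rplus 0 (map rho ts) + (if Nat.eqb l 0 then 1 else / 2)
  end.
Definition rhoT (t : T) : R := match t with None => 0 | Some t => rho t end.

Definition maxl (vs : list nat) : nat := fold_right Nat.max 0%nat vs.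

Fixpoint hs (t : tree) : nat :=
  match t with
  | Node l ts => if Nat.eqb l 0 then S (maxl (map hs ts)) else 1%nat
  end.

Fixpoint rs (t : tree) : nat :=
  match t with
  | Node l ts =>
      if Nat.eqb l 0 then
        match map rs ts with
        | [] => 1%nat
        | [v] => v
        | vs => S (maxl vs)
        end
      else 1%nat
  end.

Fixpoint ds (t : tree) : nat :=
  match t with
  | Node l ts =>
      if Nat.eqb l 0 then
        match map ds ts with
        | [] => 1%nat
        | vs =>
            let M := maxl vs in
            if Nat.leb 2 (count_occ Nat.eq_dec vs M) then S M else M
        end
      else 1%nat
  end.

Definition liftT (g : tree -> nat) (t : T) : nat :=
  match t with None => 0%nat | Some t => g t end.

Definition is_G (m : nat) (g : tree -> nat) (q : R) (N : nat) : Prop :=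
  (forall t : T, colors_okT m t = true -> rhoT t <= q -> (liftT g t <= N)%nat) /\
  (exists t : T, colors_okT m t = true /\ rhoT t <= q /\ liftT g t = N).

(* Main.v *)
Require Import Defs.
From Stdlib Require Import Reals.
From Stdlib Require Import List Lia Lra Arith.
Import ListNotations.
Open Scope R_scope.

Fixpoint tree_ind' (P : tree -> Prop)
  (H : forall l ts, Forall P ts -> P (Node l ts)) (t : tree) : P t :=
  match t with
  | Node l ts => H l ts ((fix F (ts : list tree) : Forall P ts :=
       match ts with
       | [] => Forall_nil _
       | t :: r => Forall_cons _ (tree_ind' P H t) (F r)
       end) ts)
  end.

Definition sumn (l : list nat) : nat := fold_right Nat.add 0%nat l.

Fixpoint w (t : tree) : nat :=
  match t with Node l ts => ((if Nat.eqb l 0 then 2 else 1) + sumn (map w ts))%nat end.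

Lemma w_pos t : (1 <= w t)%nat.
Proof. destruct t as [l ts]; simpl; destruct (Nat.eqb l 0); lia. Qed.

Lemma rho_w t : rho t = INR (w t) / 2.
Proof.
  induction t as [l ts IH] using tree_ind'. simpl.
  assert (E : fold_right Rplus 0 (map rho ts) = INR (sumn (map w ts)) / 2).
  { induction IH as [|t r Ht Hr IHr]; simpl. lra. rewrite plus_INR, Ht, IHr. lra. }
  rewrite E, plus_INR. destruct (Nat.eqb l 0); simpl; lra.
Qed.

Lemma hs_bound t : (2 * hs t <= w t + 1)%nat.
Proof.
  induction t as [l ts IH] using tree_ind'. simpl.
  destruct (Nat.eqb l 0); [|lia].
  assert (2 * maxl (map hs ts) <= sumn (map w ts) + 1)%nat.
  { induction IH as [|t r Ht Hr IHr]; simpl. lia.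
    unfold maxl in *; simpl. lia. }
  lia.
Qed.

Lemma len_le ts : (length ts <= sumn (map w ts))%nat.
Proof. induction ts; simpl; [lia|]. pose proof (w_pos a). lia. Qed.

Lemma rs_bound t : (3 * rs t <= w t + 2)%nat.
Proof.
  induction t as [l ts IH] using tree_ind'.
  assert (G : (3 * maxl (map rs ts) + length ts <= sumn (map w ts) + 3)%nat).
  { induction IH as [|t r Ht Hr IHr]; simpl. lia.
    pose proof (len_le r). pose proof (w_pos t).
    unfold maxl in *; simpl. lia. }
  simpl. destruct (Nat.eqb l 0); [|lia].
  destruct ts as [|t1 [|t2 r]]; simpl in *; [lia| |].
  - inversion IH; subst. lia.
  - unfold maxl in *. simpl in *. lia.
Qed.

Lemma ds_max_bound ts : Forall (fun t => 3 * 2 ^ ds t <= 2 * (w t + 2))%nat ts ->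
  (3 * 2 ^ maxl (map ds ts) <= 2 * (sumn (map w ts) + 2))%nat.
Proof.
  induction 1 as [|t r Ht Hr IHr]; simpl. lia.
  unfold maxl in *; simpl.
  destruct (Nat.max_spec (ds t) (fold_right Nat.max 0%nat (map ds r))) as [[_ ->]|[_ ->]]; lia.
Qed.

Lemma ds_one ts a : Forall (fun t => 3 * 2 ^ ds t <= 2 * (w t + 2))%nat ts ->
  (1 <= count_occ Nat.eq_dec (map ds ts) a)%nat ->
  (3 * 2 ^ a <= 2 * (sumn (map w ts) + 2))%nat.
Proof.
  induction 1 as [|t r Ht Hr IHr]; simpl. lia.
  destruct (Nat.eq_dec (ds t) a) as [<-|]; intros; [lia|]. specialize (IHr H). lia.
Qed.

Lemma ds_two ts a : Forall (fun t => 3 * 2 ^ ds t <= 2 * (w t + 2))%nat ts ->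
  (2 <= count_occ Nat.eq_dec (map ds ts) a)%nat ->
  (6 * 2 ^ a <= 2 * sumn (map w ts) + 8)%nat.
Proof.
  induction 1 as [|t r Ht Hr IHr]; simpl. lia.
  destruct (Nat.eq_dec (ds t) a) as [<-|]; intros.
  - assert (1 <= count_occ Nat.eq_dec (map ds r) (ds t))%nat by lia.
    pose proof (ds_one r (ds t) Hr H0). lia.
  - specialize (IHr H). lia.
Qed.

Lemma ds_bound t : (3 * 2 ^ ds t <= 2 * (w t + 2))%nat.
Proof.
  induction t as [l ts IH] using tree_ind'.
  destruct (Nat.eqb l 0) eqn:El.
  2:{ simpl; rewrite El; simpl. pose proof (w_pos (Node l ts)). simpl in H; rewrite El in H. lia. }
  destruct ts as [|t1 r].
  { simpl; rewrite El; simpl; lia. }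
  assert (Hd : ds (Node l (t1 :: r)) = let vs := map ds (t1 :: r) in
     if Nat.leb 2 (count_occ Nat.eq_dec vs (maxl vs)) then S (maxl vs) else maxl vs).
  { simpl. rewrite El. reflexivity. }
  assert (Hw : w (Node l (t1 :: r)) = (2 + sumn (map w (t1 :: r)))%nat).
  { simpl. rewrite El. reflexivity. }
  rewrite Hd, Hw. cbv zeta.
  destruct (Nat.leb 2 _) eqn:E.
  - apply Nat.leb_le in E. pose proof (ds_two _ _ IH E).
    rewrite Nat.pow_succ_r'. lia.
  - pose proof (ds_max_bound _ IH). lia.
Qed.

Fixpoint Hc (n : nat) : tree := match n with O => Node 1 [] | S n => Node 0 [Hc n] end.
Fixpoint Rc (n : nat) : tree := match n with O => Node 1 [] | S n => Node 0 [Rc n; Node 1 []] end.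
Fixpoint Dc (n : nat) : tree := match n with O => Node 1 [] | S n => Node 0 [Dc n; Dc n] end.

Lemma Hc_ok m n : (1 <= m)%nat -> colors_ok m (Hc n) = true.
Proof. intros. destruct m as [|m]; [lia|]. induction n; simpl; rewrite ?IHn; auto. Qed.
Lemma Rc_ok m n : (1 <= m)%nat -> colors_ok m (Rc n) = true.
Proof. intros. destruct m as [|m]; [lia|]. induction n; simpl; rewrite ?IHn; auto. Qed.
Lemma Dc_ok m n : (1 <= m)%nat -> colors_ok m (Dc n) = true.
Proof. intros. destruct m as [|m]; [lia|]. induction n; simpl; rewrite ?IHn; auto. Qed.

Lemma Hc_val n : hs (Hc n) = S n /\ w (Hc n) = (2 * n + 1)%nat.
Proof. induction n; simpl; auto. destruct IHn as [-> ->]. unfold maxl; simpl. split; lia. Qed.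
Lemma Rc_val n : rs (Rc n) = S n /\ w (Rc n) = (3 * n + 1)%nat.
Proof. induction n; simpl; auto. destruct IHn as [-> ->]. unfold maxl; simpl. split; lia. Qed.
Lemma Dc_val n : ds (Dc n) = S n /\ (w (Dc n) + 2 = 3 * 2 ^ n)%nat.
Proof.
  induction n; simpl; auto. destruct IHn as [E1 E]. split.
  - rewrite E1. unfold maxl; simpl. rewrite Nat.max_id.
    destruct (Nat.eq_dec n n); [|congruence]. simpl. reflexivity.
  - unfold sumn; simpl. lia.
Qed.

Lemma int_part_eq (r : R) (z : Z) : IZR z <= r -> r < IZR z + 1 -> Int_part r = z.
Proof.
  intros. unfold Int_part. rewrite <- (tech_up r (z + 1)); try rewrite plus_IZR; try lra. ring.
Qed.

Lemma wle t k : rho t <= INR k / 2 -> (w t <= k)%nat.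
Proof. rewrite rho_w. intros. apply INR_le. lra. Qed.

Theorem mainTheorem10 (m : nat) (hm : (1 <= m)%nat) (k : nat) (hk : (1 <= k)%nat) :
  let q := INR k / 2 in
  (exists N, is_G m hs q N /\ INR N = IZR (Int_part (q + / 2))) /\
  (exists N, is_G m rs q N /\ INR N = IZR (Int_part (2 / 3 * (q + 1)))) /\
  (exists N, is_G m ds q N /\
             INR N = IZR (Int_part (ln ((q + 1) / 3) / ln 2)) + 2).
Proof.
  intros q. split; [|split].
  -
    assert (Hn : exists n, (2 * n + 1 <= k < 2 * n + 3)%nat).
    { exists ((k - 1) / 2)%nat. pose proof (Nat.div_mod (k - 1) 2).
      pose proof (Nat.mod_upper_bound (k - 1) 2). lia. }
    destruct Hn as [n Hn]. exists (S n). split; [split|].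
    + intros [t|] _ Hr; simpl in *; [|lia]. apply wle in Hr. pose proof (hs_bound t). lia.
    + exists (Some (Hc n)). destruct (Hc_val n) as [E1 E2]. simpl.
      split; [apply Hc_ok; auto|]. split; [|auto]. rewrite rho_w, E2.
      unfold q. apply Rmult_le_compat_r; [lra|]. apply le_INR; lia.
    + rewrite (int_part_eq _ (Z.of_nat (S n))); [rewrite <- INR_IZR_INZ; reflexivity| |];
      rewrite <- INR_IZR_INZ; unfold q.
      * assert (H1 : INR (2 * n + 1) <= INR k) by (apply le_INR; lia).
        rewrite plus_INR, mult_INR in H1. rewrite S_INR. simpl in H1. lra.
      * assert (H1 : INR k < INR (2 * n + 3)) by (apply lt_INR; lia).
        rewrite plus_INR, mult_INR in H1. rewrite S_INR. simpl in H1. lra.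
  -
    assert (Hn : exists n, (3 * n + 1 <= k < 3 * n + 4)%nat).
    { exists ((k - 1) / 3)%nat. pose proof (Nat.div_mod (k - 1) 3).
      pose proof (Nat.mod_upper_bound (k - 1) 3). lia. }
    destruct Hn as [n Hn]. exists (S n). split; [split|].
    + intros [t|] _ Hr; simpl in *; [|lia]. apply wle in Hr. pose proof (rs_bound t). lia.
    + exists (Some (Rc n)). destruct (Rc_val n) as [E1 E2]. simpl.
      split; [apply Rc_ok; auto|]. split; [|auto]. rewrite rho_w, E2.
      unfold q. apply Rmult_le_compat_r; [lra|]. apply le_INR; lia.
    + rewrite (int_part_eq _ (Z.of_nat (S n))); [rewrite <- INR_IZR_INZ; reflexivity| |];
      rewrite <- INR_IZR_INZ; unfold q.
      * assert (H1 : INR (3 * n + 1) <= INR k) by (apply le_INR; lia).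
        rewrite plus_INR, mult_INR in H1. rewrite S_INR. simpl in H1. lra.
      * assert (H1 : INR k < INR (3 * n + 4)) by (apply lt_INR; lia).
        rewrite plus_INR, mult_INR in H1. rewrite S_INR. simpl in H1. lra.
  -
    assert (Hn : exists n, (3 * 2 ^ n <= k + 2 < 3 * 2 ^ S n)%nat).
    { set (a := ((k + 2) / 3)%nat).
      pose proof (Nat.div_mod (k + 2) 3). pose proof (Nat.mod_upper_bound (k + 2) 3).
      assert (0 < a)%nat by (unfold a in *; lia).
      pose proof (Nat.log2_spec a H1). exists (Nat.log2 a).
      rewrite Nat.pow_succ_r' in *. unfold a in *. lia. }
    destruct Hn as [n Hn]. exists (S n). split; [split|].
    + intros [t|] _ Hr; simpl in *; [|lia]. apply wle in Hr. pose proof (ds_bound t).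
      assert (2 ^ ds t < 2 ^ S (S n))%nat.
      { rewrite !Nat.pow_succ_r' in *. lia. }
      apply Nat.pow_lt_mono_r_iff in H0; lia.
    + exists (Some (Dc n)). destruct (Dc_val n) as [E1 E2]. simpl.
      split; [apply Dc_ok; auto|]. split; [|auto]. rewrite rho_w.
      unfold q. apply Rmult_le_compat_r; [lra|]. apply le_INR; lia.
    + set (P := 2 ^ n).
      assert (HP : INR (2 ^ n) = P) by (rewrite pow_INR; reflexivity).
      assert (H1 : INR (3 * 2 ^ n) <= INR (k + 2)) by (apply le_INR; lia).
      assert (H2 : INR (k + 2) < INR (3 * 2 ^ S n)) by (apply lt_INR; lia).
      rewrite Nat.pow_succ_r' in H2.
      rewrite !mult_INR, plus_INR, HP in *. simpl in H1, H2.
      assert (Ppos : 0 < P) by (apply pow_lt; lra).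
      set (y := (INR k + 2) / (3 * P)).
      assert (Hy1 : 1 <= y).
      { unfold y. apply (Rmult_le_reg_r (3 * P)); [lra|].
        unfold Rdiv. rewrite Rmult_assoc, Rinv_l; lra. }
      assert (Hy2 : y < 2).
      { unfold y. apply (Rmult_lt_reg_r (3 * P)); [lra|].
        unfold Rdiv. rewrite Rmult_assoc, Rinv_l; lra. }
      assert (Ex : (q + 1) / 3 = y * P * / 2) by (unfold y, q; field; lra).
      assert (L2 : 0 < ln 2) by (rewrite <- ln_1; apply ln_increasing; lra).
      assert (Ly1 : 0 <= ln y).
      { destruct (Req_dec y 1) as [->|]. rewrite ln_1; lra.
        rewrite <- ln_1. left. apply ln_increasing; lra. }
      assert (Ly2 : ln y < ln 2) by (apply ln_increasing; lra).
      assert (Eln : ln ((q + 1) / 3) / ln 2 = ln y / ln 2 + INR n - 1).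
      { rewrite Ex, !ln_mult, ln_Rinv; try lra;
        try (apply Rmult_lt_0_compat; lra); try (apply Rinv_0_lt_compat; lra).
        unfold P. rewrite ln_pow by lra. field. lra. }
      assert (D1 : 0 <= ln y / ln 2).
      { unfold Rdiv. apply Rmult_le_pos; [lra|]. left; apply Rinv_0_lt_compat; lra. }
      assert (D2 : ln y / ln 2 < 1).
      { apply (Rmult_lt_reg_r (ln 2)); [lra|]. unfold Rdiv.
        rewrite Rmult_assoc, Rinv_l; lra. }
      rewrite Eln. rewrite (int_part_eq _ (Z.of_nat n - 1)).
      * rewrite minus_IZR, <- INR_IZR_INZ, S_INR. lra.
      * rewrite minus_IZR, <- INR_IZR_INZ. lra.
      * rewrite minus_IZR, <- INR_IZR_INZ. lra.
Qed.
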